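(* Let $W$ and $V$ be two B-DMCs such that $\lvert\Delta_{V}\rvert \prec_{icx} \lvert\Delta_{W}\rvert$. Then for any $\epsilon\in(0,1)$ and any function $\phi:[0,1]\to\mathbb{R}$ that is convex and increasing on $[0,1]$ with $\phi(0)=0$ and $\phi(1)=1$, we have $\mathcal{A}_{N}^{\phi,\epsilon}(V)\subset\mathcal{A}_{N}^{\phi,\epsilon}(W)$ for all $N=2^n$, $n\ge 1$.
   Context: For a binary-input discrete memoryless channel (B-DMC) $W:\{0,1\}\to\mathcal{Y}$, let $q_W(y)=\tfrac12(W(y|0)+W(y|1))$ and, for $q_W(y)>0$, $\Delta_W(y)=\frac{W(y|0)-W(y|1)}{W(y|0)+W(y|1)}$; $\Delta_W$ denotes the random variable $\Delta_W(Y)$ with $Y\sim q_W$. The polarization transforms are $W^-(y_1y_2|u_1)=\sum_{u_2\in\{0,1\}}\tfrac12 W(y_1|u_1\oplus u_2)W(y_2|u_2)$ (a channel $\{0,1\}\to\mathcal{Y}^2$) and $W^+(y_1y_2u_1|u_2)=\tfrac12 W(y_1|u_1\oplus u_2)W(y_2|u_2)$ (a channel $\{0,1\}\to\mathcal{Y}^2\times\{0,1\}$). For $s=(s_1,\dots,s_n)\in\{+,-\}^n$, $W^s$ is defined recursively by $W^{s_1\cdots s_n}=(W^{s_1\cdots s_{n-1}})^{s_n}$. For $\phi$ convex increasing on $[0,1]$ with $\phi(0)=0,\phi(1)=1$ and $\epsilon\in(0,1)$, the information set is $\mathcal{A}_{N}^{\phi,\epsilon}(W)=\{s\in\{+,-\}^n:\mathbb{E}[\phi(\lvert\Delta_{W^s}\rvert)]\ge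 1-\epsilon\}$, $N=2^n$. For real random variables, $X\prec_{icx}Y$ means $\mathbb{E}[\psi(X)]\le\mathbb{E}[\psi(Y)]$ for every increasing convex $\psi$ for which the expectations exist. *)

(* Defs.v *)
From HB Require Import structures.
From mathcomp Require Import all_boot all_order all_algebra.
Set Implicit Arguments. Unset Strict Implicit. Unset Printing Implicit Defensive.
Import Order.TTheory GRing.Theory Num.Theory.
Local Open Scope ring_scope.

(* A binary-input DMC with finite output alphabet [out]; input bit 0 is
   [false], input bit 1 is [true]; [tr y u] = W(y|u). *)
Record bdmc (R : realFieldType) := BDMC { out : finType; tr : out -> bool -> R }.
Arguments BDMC {R} out tr.
Arguments tr {R} b _ _.
Arguments out {R} b.

Definition is_bdmc (R : realFieldType) (W : bdmc R) : Prop :=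
  (forall y u, 0 <= tr W y u) /\ (forall u, \sum_(y : out W) tr W y u = 1).

Section Channel.
Variable R : realFieldType.
Implicit Types W : bdmc R.

Definition qW W (y : out W) : R := (tr W y false + tr W y true) / 2.

(* Delta_W(y), given the value 0 where q_W(y) = 0 (those points carry no mass). *)
Definition DeltaW W (y : out W) : R :=
  if qW (W:=W) y == 0 then 0
  else (tr W y false - tr W y true) / (tr W y false + tr W y true).

Definition minus_ch W : bdmc R :=
  BDMC (out W * out W)%type
    (fun y u1 => \sum_(u2 : bool) 2^-1 * tr W y.1 (addb u1 u2) * tr W y.2 u2).

Definition plus_ch W : bdmc R :=
  BDMC ((out W * out W) * bool)%type
    (fun y u2 => 2^-1 * tr W y.1.1 (addb y.2 u2) * tr W y.1.2 u2).

Inductive pm := Pl | Mi.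

Definition step W (b : pm) : bdmc R :=
  match b with Pl => plus_ch W | Mi => minus_ch W end.

Definition polar W (s : seq pm) : bdmc R := foldl step W s.

Definition Eabs W (f : R -> R) : R := \sum_(y : out W) qW (W:=W) y * f `|DeltaW y|.

Definition convex_on (P : R -> Prop) (f : R -> R) : Prop :=
  forall x y t, P x -> P y -> 0 <= t <= 1 ->
    f (t * x + (1 - t) * y) <= t * f x + (1 - t) * f y.

Definition nondecr_on (P : R -> Prop) (f : R -> R) : Prop :=
  forall x y, P x -> P y -> x <= y -> f x <= f y.

Definition icx_le V W : Prop :=
  forall psi : R -> R, nondecr_on (fun _ => True) psi -> convex_on (fun _ => True) psi ->
    Eabs V psi <= Eabs W psi.

(* s \in A_N^{phi,eps}(W), N = 2^(size s) *)
Definition infoset W (phi : R -> R) (eps : R) (s : seq pm) : Prop :=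
  Eabs (polar W s) phi >= 1 - eps.

End Channel.

(* Main.v *)
Require Import Defs.
From HB Require Import structures.
From mathcomp Require Import all_boot all_order all_algebra ring lra.
Set Implicit Arguments. Unset Strict Implicit. Unset Printing Implicit Defensive.
Import Order.TTheory GRing.Theory Num.Theory.
Local Open Scope ring_scope.

Definition in01 (R : realFieldType) (x : R) : Prop := 0 <= x <= 1.

Definition Pf (R : realFieldType) (psi : R -> R) (s x : R) : R :=
  if s == 0 then 0 else s * psi (x / s).

Definition rr (R : realFieldType) (s x : R) : R := if s == 0 then 0 else x / s.

Lemma Pf_eq (R : realFieldType) (psi : R -> R) s x :
  0 <= x <= s -> Pf psi s x = s * psi (rr s x) /\ 0 <= rr s x <= 1 /\ x = s * rr s x.
Proof.
move=> /andP[hx hs]; rewrite /Pf /rr; case: eqP => [s0|/eqP s0].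
  by rewrite s0 !mul0r; split=> //; split; [rewrite lexx ler01 | rewrite s0 in hs; lra].
have sp : 0 < s by rewrite lt_def s0; lra.
split=> //; split; last by field.
apply/andP; split; first by apply: divr_ge0; lra.
by rewrite ler_pdivrMr // mul1r.
Qed.

Lemma Pf_convex (R : realFieldType) (psi : R -> R) s1 x1 s2 x2 t :
  convex_on (@in01 R) psi ->
  0 <= x1 <= s1 -> 0 <= x2 <= s2 -> 0 <= t <= 1 ->
  Pf psi (t * s1 + (1 - t) * s2) (t * x1 + (1 - t) * x2)
    <= t * Pf psi s1 x1 + (1 - t) * Pf psi s2 x2.
Proof.
move=> cv h1 h2 ht.
have h3 : 0 <= t * x1 + (1 - t) * x2 <= t * s1 + (1 - t) * s2.
  move: h1 h2 ht => /andP[? ?] /andP[? ?] /andP[? ?]; apply/andP; split; nra.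
have [e1 [r1 x1e]] := Pf_eq psi h1.
have [e2 [r2 x2e]] := Pf_eq psi h2.
have [e3 _] := Pf_eq psi h3.
rewrite e1 e2 e3.
set s := t * s1 + (1 - t) * s2.
move: ht h1 h2 => /andP[t0 t1] /andP[? ?] /andP[? ?].
have [s0|sn0] := eqVneq s 0.
  rewrite s0 mul0r.
  have a1 : t * s1 = 0 by move: s0; rewrite /s; nra.
  have a2 : (1 - t) * s2 = 0 by move: s0; rewrite /s; nra.
  rewrite !mulrA a1 a2; lra.
have sp : 0 < s by rewrite lt_def sn0 /s; nra.
rewrite {1}/rr (negbTE sn0).
move: (rr s1 x1) (rr s2 x2) r1 r2 x1e x2e => a b ra rb -> ->.
set l := t * s1 / s.
have l01 : 0 <= l <= 1.
  apply/andP; split; first by apply: divr_ge0; nra.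
  by rewrite ler_pdivrMr // mul1r /s; nra.
have -> : (t * (s1 * a) + (1 - t) * (s2 * b)) / s = l * a + (1 - l) * b.
  by rewrite /l /s; field; rewrite -/s.
have := cv a b l ra rb l01.
have -> : t * (s1 * psi a) + (1 - t) * (s2 * psi b) = s * (l * psi a + (1 - l) * psi b).
  by rewrite /l /s; field; rewrite -/s.
by move=> H; apply: ler_wpM2l => //; lra.
Qed.

Lemma Pf_mono (R : realFieldType) (psi : R -> R) s x x' :
  nondecr_on (@in01 R) psi -> 0 <= x -> x <= x' -> x' <= s ->
  Pf psi s x <= Pf psi s x'.
Proof.
move=> mo h0 h1 h2; rewrite /Pf; case: eqP => [//|/eqP s0].
have sp : 0 < s by rewrite lt_def s0; lra.
apply: ler_wpM2l; first lra.
apply: mo.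
- apply/andP; split; first by apply: divr_ge0; lra.
  by rewrite ler_pdivrMr // mul1r; lra.
- apply/andP; split; first by apply: divr_ge0; lra.
  by rewrite ler_pdivrMr // mul1r; lra.
- by rewrite ler_pM2r // invr_gt0.
Qed.

Definition gg (R : realFieldType) (psi : R -> R) (a b : R) : R :=
  (Pf psi (1 + a * b) `|a + b| + Pf psi (1 - a * b) `|b - a|) / 2.

Lemma gD1 (R : realFieldType) (a b : R) : in01 a -> in01 b -> 0 <= `|a + b| <= 1 + a * b.
Proof.
move=> /andP[? ?] /andP[? ?]; rewrite ger0_norm; last lra.
apply/andP; split; nra.
Qed.

Lemma gD2 (R : realFieldType) (a b : R) : in01 a -> in01 b -> 0 <= `|b - a| <= 1 - a * b.
Proof.
move=> /andP[? ?] /andP[? ?]; rewrite normr_ge0 /= ler_norml.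
apply/andP; split; nra.
Qed.

Lemma gg_sym (R : realFieldType) (psi : R -> R) a b : gg psi a b = gg psi b a.
Proof. by rewrite /gg (mulrC a b) (addrC a b) distrC. Qed.

Lemma gg0 (R : realFieldType) (psi : R -> R) b : in01 b -> gg psi 0 b = psi b.
Proof.
move=> /andP[? ?]; rewrite /gg mul0r addr0 subr0 add0r subr0 ger0_norm //.
by rewrite /Pf oner_eq0 divr1 mul1r; field.
Qed.

Lemma gg_ge (R : realFieldType) (psi : R -> R) a b :
  convex_on (@in01 R) psi -> nondecr_on (@in01 R) psi ->
  in01 a -> in01 b -> psi b <= gg psi a b.
Proof.
move=> cv mo ha hb.
have [e1 [r1 x1]] := Pf_eq psi (gD1 ha hb).
have [e2 [r2 x2]] := Pf_eq psi (gD2 ha hb).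
rewrite /gg e1 e2.
move: (rr (1 + a * b) `|a + b|) (rr (1 - a * b) `|b - a|) r1 r2 x1 x2 => u v ru rv x1 x2.
move: ha hb => /andP[? ?] /andP[? ?].
set t := (1 + a * b) / 2.
have t01 : 0 <= t <= 1 by apply/andP; split; rewrite /t; nra.
have := cv u v t ru rv t01.
have -> : ((1 + a * b) * psi u + (1 - a * b) * psi v) / 2 = t * psi u + (1 - t) * psi v.
  by rewrite /t; field.
apply: le_trans.
have hm : t * u + (1 - t) * v = (`|a + b| + `|b - a|) / 2.
  by rewrite /t x1 x2; field.
have hab : `|a + b| = a + b. rewrite ger0_norm; lra.
have hn : (`|b - a| = b - a /\ a <= b) \/ (`|b - a| = a - b /\ b < a).
  have [h|h] := leP a b; [left; rewrite ger0_norm | right; rewrite ltr0_norm]; try split; lra.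
apply: mo.
- by apply/andP; split.
- rewrite /in01 hm hab; apply/andP; split; case: hn => [[-> ?]|[-> ?]]; lra.
- rewrite hm hab; case: hn => [[-> ?]|[-> ?]]; lra.
Qed.

Lemma gg_convex (R : realFieldType) (psi : R -> R) b :
  convex_on (@in01 R) psi -> nondecr_on (@in01 R) psi -> in01 b ->
  convex_on (@in01 R) (fun a => gg psi a b).
Proof.
move=> cv mo hb a1 a2 t ha1 ha2 ht.
have d11 := gD1 ha1 hb; have d12 := gD1 ha2 hb.
have d21 := gD2 ha1 hb; have d22 := gD2 ha2 hb.
move: (ha1) (ha2) (hb) (ht) => /andP[? ?] /andP[? ?] /andP[? ?] /andP[? ?].
rewrite /gg.
have E1 : 1 + (t * a1 + (1 - t) * a2) * b = t * (1 + a1 * b) + (1 - t) * (1 + a2 * b) by ring.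
have E2 : `|t * a1 + (1 - t) * a2 + b| = t * `|a1 + b| + (1 - t) * `|a2 + b|.
  by rewrite !ger0_norm //; nra.
have E3 : 1 - (t * a1 + (1 - t) * a2) * b = t * (1 - a1 * b) + (1 - t) * (1 - a2 * b) by ring.
have E4 : `|b - (t * a1 + (1 - t) * a2)| <= t * `|b - a1| + (1 - t) * `|b - a2|.
  have -> : b - (t * a1 + (1 - t) * a2) = t * (b - a1) + (1 - t) * (b - a2) by ring.
  apply: le_trans (ler_normD _ _) _.
  rewrite !normrM !(ger0_norm (x := t)) // !(ger0_norm (x := 1 - t)) //; lra.
rewrite E1 E2 E3.
have C1 := Pf_convex cv d11 d12 ht.
have C2 := Pf_convex cv d21 d22 ht.
have M : Pf psi (t * (1 - a1 * b) + (1 - t) * (1 - a2 * b)) `|b - (t * a1 + (1 - t) * a2)|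
   <= Pf psi (t * (1 - a1 * b) + (1 - t) * (1 - a2 * b)) (t * `|b - a1| + (1 - t) * `|b - a2|).
  move: d21 d22 => /andP[? ?] /andP[? ?].
  apply: Pf_mono => //; nra.
lra.
Qed.

Lemma convex_min_mono (R : realFieldType) (f : R -> R) :
  convex_on (@in01 R) f -> (forall a, in01 a -> f 0 <= f a) -> nondecr_on (@in01 R) f.
Proof.
move=> cv m x y hx hy xy.
have h0 : in01 (0 : R) by rewrite /in01 lexx ler01.
move: (hx) (hy) => /andP[? ?] /andP[? ?].
have [y0|yn0] := eqVneq y 0.
  have -> : x = y by lra.
  by [].
have yp : 0 < y by rewrite lt_def yn0; lra.
set t := 1 - x / y.
have t01 : 0 <= t <= 1.
  apply/andP; split; rewrite /t.
    by rewrite subr_ge0 ler_pdivrMr // mul1r.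
  by rewrite lerBlDr lerDl; apply: divr_ge0; lra.
have := cv 0 y t h0 hy t01.
have -> : t * 0 + (1 - t) * y = x by rewrite /t; field.
have := m y hy.
move: t01 => /andP[? ?]; nra.
Qed.

Lemma gg_mono (R : realFieldType) (psi : R -> R) b :
  convex_on (@in01 R) psi -> nondecr_on (@in01 R) psi -> in01 b ->
  nondecr_on (@in01 R) (fun a => gg psi a b).
Proof.
move=> cv mo hb; apply: convex_min_mono; first exact: gg_convex.
by move=> a ha; rewrite gg0 //; apply: gg_ge.
Qed.

Lemma mul_convex (R : realFieldType) (psi : R -> R) b :
  convex_on (@in01 R) psi -> in01 b -> convex_on (@in01 R) (fun a => psi (a * b)).
Proof.
move=> cv hb a1 a2 t h1 h2 ht.
have -> : (t * a1 + (1 - t) * a2) * b = t * (a1 * b) + (1 - t) * (a2 * b) by ring.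
move: h1 h2 hb => /andP[? ?] /andP[? ?] /andP[? ?].
apply: cv => //; apply/andP; split; nra.
Qed.

Lemma mul_mono (R : realFieldType) (psi : R -> R) b :
  nondecr_on (@in01 R) psi -> in01 b -> nondecr_on (@in01 R) (fun a => psi (a * b)).
Proof.
move=> mo hb a1 a2 h1 h2 h.
move: h1 h2 hb => /andP[? ?] /andP[? ?] /andP[? ?].
apply: mo; try (apply/andP; split); nra.
Qed.

Lemma glue_key (R : realFieldType) (f : R -> R) (c k : R) :
  convex_on (fun x => x <= c) f -> (forall x, x <= c -> f c + k * (x - c) <= f x) ->
  forall x y t, x <= y -> 0 <= t <= 1 ->
  (fun x => if x <= c then f x else f c + k * (x - c)) (t * x + (1 - t) * y)
  <= t * (fun x => if x <= c then f x else f c + k * (x - c)) x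
     + (1 - t) * (fun x => if x <= c then f x else f c + k * (x - c)) y.
Proof.
move=> cv lo x y t xy /andP[t0 t1] /=.
set z := t * x + (1 - t) * y.
have xz : x <= z by rewrite /z; nra.
have zy : z <= y by rewrite /z; nra.
have [yc|cy] := leP y c.
  rewrite (le_trans zy yc) (le_trans xz (le_trans zy yc)).
  by apply: cv => //; [lra | apply/andP].
have [xc|cx] := leP x c; last first.
  rewrite (leNgt z c) (lt_le_trans cx xz) /=.
  by rewrite /z; lra.
have [zc|cz] := leP z c; last first.
  have := lo x xc; rewrite /z; nra.
have [xc'|xc'] := eqVneq x c.
  have e : (1 - t) * (y - c) = 0 by move: zc; rewrite /z xc'; nra.
  have t1' : t = 1.
    by move: e => /eqP; rewrite mulf_eq0 => /orP[/eqP|/eqP]; lra.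
  by rewrite /z t1' xc' subrr !mul0r mul1r !addr0; lra.
have xlc : x < c by rewrite lt_def eq_sym xc' xc.
set t' := (c - z) / (c - x).
have cxp : 0 < c - x by lra.
have t'01 : 0 <= t' <= 1.
  apply/andP; split; rewrite /t'; first by apply: divr_ge0; lra.
  by rewrite ler_pdivrMr // mul1r; lra.
have ez : z = t' * x + (1 - t') * c by rewrite /t'; field; lra.
have := cv x c t' xc (lexx c) t'01; rewrite -ez => H.
apply: (le_trans H).
have L := lo x xc.
have D : 0 <= (1 - t) * (y - c) * (f x - (f c + k * (x - c))) / (c - x).
  apply: divr_ge0; last lra.
  apply: mulr_ge0; [apply: mulr_ge0|]; lra.
have E : t * f x + (1 - t) * (f c + k * (y - c)) - (t' * f x + (1 - t') * f c)
    = (1 - t) * (y - c) * (f x - (f c + k * (x - c))) / (c - x).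
  by rewrite /t' /z; field; lra.
lra.
Qed.

Lemma glue (R : realFieldType) (f : R -> R) (c k : R) :
  convex_on (fun x => x <= c) f -> (forall x, x <= c -> f c + k * (x - c) <= f x) ->
  convex_on (fun _ => True) (fun x => if x <= c then f x else f c + k * (x - c)).
Proof.
move=> cv lo x y t _ _ ht.
have [xy|yx] := leP x y; first exact: glue_key.
have ht' : 0 <= 1 - t <= 1 by move: ht => /andP[? ?]; apply/andP; split; lra.
have := glue_key cv lo (ltW yx) ht'.
have -> : (1 - t) * y + (1 - (1 - t)) * x = t * x + (1 - t) * y by ring.
have -> : 1 - (1 - t) = t by ring.
lra.
Qed.

Lemma mx_facts (R : realFieldType) (x : R) :
  0 <= Num.max x 0 /\ x <= Num.max x 0 /\ (0 <= x -> Num.max x 0 = x) /\ (x <= 0 -> Num.max x 0 = 0).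
Proof.
split; first by rewrite le_max lexx orbT.
split; first by rewrite le_max lexx.
by split=> h; [rewrite max_l | rewrite max_r].
Qed.

Lemma mx_le (R : realFieldType) (x y : R) : x <= y -> Num.max x 0 <= Num.max y 0.
Proof.
move=> h; have [a [b _]] := mx_facts y.
by rewrite ge_max a (le_trans h b).
Qed.

Lemma mx_cvx (R : realFieldType) (x y t : R) : 0 <= t <= 1 ->
  Num.max (t * x + (1 - t) * y) 0 <= t * Num.max x 0 + (1 - t) * Num.max y 0.
Proof.
move=> /andP[? ?]; have [a [b _]] := mx_facts x; have [c [d _]] := mx_facts y.
rewrite ge_max; apply/andP; split; nra.
Qed.

Lemma ext_psi (R : realFieldType) (psi : R -> R) (c : R) :
  convex_on (@in01 R) psi -> nondecr_on (@in01 R) psi -> 0 <= c -> c < 1 ->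
  exists psi' : R -> R, convex_on (fun _ => True) psi' /\ nondecr_on (fun _ => True) psi' /\
    (forall x, (0 <= x <= c) \/ x = 1 -> psi' x = psi x).
Proof.
move=> cv mo c0 c1.
pose f := fun x => psi (Num.max x 0).
pose k := (psi 1 - psi c) / (1 - c).
have fc : f c = psi c by rewrite /f max_l.
have i1 : in01 (1 : R) by rewrite /in01 ler01 lexx.
have ic : in01 c by rewrite /in01 c0; lra.
have k0 : 0 <= k.
  rewrite /k; apply: divr_ge0; last lra.
  by rewrite subr_ge0; apply: mo => //; lra.
have imx : forall x, x <= c -> in01 (Num.max x 0).
  move=> x xc; have [a [b [d e]]] := mx_facts x; apply/andP; split => //.
  have [x0|x0] := leP 0 x; [exact: (le_trans xc (ltW c1)) | exact: ler01].
have fcv : convex_on (fun x => x <= c) f.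
  move=> x y t hx hy ht; rewrite /f.
  have i3 : in01 (t * Num.max x 0 + (1 - t) * Num.max y 0).
    have /andP[? ?] := imx x hx; have /andP[? ?] := imx y hy; move: ht => /andP[? ?].
    by apply/andP; split; nra.
  apply: le_trans (cv _ _ t (imx x hx) (imx y hy) ht).
  apply: mo => //; last exact: mx_cvx.
  have [a _] := mx_facts (t * x + (1 - t) * y); apply/andP; split => //.
  have /andP[_ ?] := i3; apply: le_trans (mx_cvx _ _ ht) _; lra.
have lo0 : forall x, 0 <= x -> x <= c -> f c + k * (x - c) <= f x.
  move=> x x0 xc; rewrite fc /f max_l //.
  set mu := (1 - c) / (1 - x).
  have hx : in01 x by apply/andP; split; lra.
  have mu01 : 0 <= mu <= 1.
    apply/andP; split; rewrite /mu; first by apply: divr_ge0; lra.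
    by rewrite ler_pdivrMr ?mul1r; lra.
  have := cv x 1 mu hx i1 mu01.
  have -> : mu * x + (1 - mu) * 1 = c by rewrite /mu; field; lra.
  move=> H.
  have E : psi x - (psi c + k * (x - c)) = ((1 - x) / (1 - c)) * (mu * psi x + (1 - mu) * psi 1 - psi c).
    by rewrite /k /mu; field; apply/andP; split; lra.
  have : 0 <= ((1 - x) / (1 - c)) * (mu * psi x + (1 - mu) * psi 1 - psi c).
    apply: mulr_ge0; last lra.
    by apply: divr_ge0; lra.
  lra.
have lo : forall x, x <= c -> f c + k * (x - c) <= f x.
  move=> x xc; have [x0|x0] := leP 0 x; first exact: lo0.
  have := lo0 0 (lexx 0) c0.
  have -> : f x = f 0 by rewrite /f !max_r //; apply: ltW.
  nra.
exists (fun x => if x <= c then f x else f c + k * (x - c)).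
split; first exact: glue.
split.
  move=> x y _ _ xy /=.
  have [yc|cy] := leP y c.
    rewrite (le_trans xy yc) /f; apply: mo; [exact: imx (le_trans xy yc)| exact: imx | exact: mx_le].
  have [xc|cx] := leP x c; last by nra.
  have : f x <= f c by apply: mo; [exact: imx | exact: imx | exact: mx_le].
  nra.
move=> x [/andP[x0 xc]|->].
  by rewrite xc /f max_l.
have -> : (1 <= c) = false by apply/negbTE; rewrite -ltNge.
rewrite fc /k; field; lra.
Qed.

Definition nonneg (R : realFieldType) (W : bdmc R) := forall y u, 0 <= tr W y u.

Lemma trE (R : realFieldType) (W : bdmc R) (y : out W) : nonneg W ->
  tr W y false = qW y * (1 + DeltaW y) /\ tr W y true = qW y * (1 - DeltaW y).
Proof.
move=> nn; have a0 := nn y false; have b0 := nn y true.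
rewrite /DeltaW /qW; case: eqP => [h|/eqP h].
  have a : tr W y false = 0 by move: h; lra.
  have b : tr W y true = 0 by move: h; lra.
  by rewrite a b; split; ring.
have hs : tr W y false + tr W y true != 0 by move: h; apply: contra => /eqP ->; rewrite mul0r.
by split; field.
Qed.

Lemma qW_ge0 (R : realFieldType) (W : bdmc R) (y : out W) : nonneg W -> 0 <= qW y.
Proof. move=> nn; have := nn y false; have := nn y true; rewrite /qW; lra. Qed.

Lemma d01 (R : realFieldType) (W : bdmc R) (y : out W) : nonneg W -> in01 `|DeltaW y|.
Proof.
move=> nn; have a0 := nn y false; have b0 := nn y true.
rewrite /in01 normr_ge0 /= /DeltaW; case: eqP => [_|/eqP h]; first by rewrite normr0 ler01.
have sp : 0 < tr W y false + tr W y true.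
  rewrite lt_def; apply/andP; split; last lra.
  by move: h; apply: contra => /eqP; rewrite /qW => ->; rewrite mul0r.
rewrite normrM normfV (gtr0_norm sp) ler_pdivrMr // mul1r ler_norml; apply/andP; split; lra.
Qed.

Lemma nonneg_minus (R : realFieldType) (W : bdmc R) : nonneg W -> nonneg (minus_ch W).
Proof.
move=> nn y u; rewrite /= big_bool /=.
have := nn y.1 (~~ u); have := nn y.1 u; have := nn y.2 true; have := nn y.2 false.
rewrite addbT addbF; nra.
Qed.

Lemma nonneg_plus (R : realFieldType) (W : bdmc R) : nonneg W -> nonneg (plus_ch W).
Proof.
move=> nn y u; rewrite /=.
have := nn y.1.1 (addb y.2 u); have := nn y.1.2 u; nra.
Qed.

Lemma term_eq (R : realFieldType) (U : bdmc R) (y : out U) (A B : R) (psi : R -> R) :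
  tr U y false = A -> tr U y true = B ->
  qW y * psi `|DeltaW y| = (if (A + B) / 2 == 0 then 0 else (A + B) / 2 * psi `|(A - B) / (A + B)|).
Proof.
move=> hA hB; rewrite /DeltaW /qW hA hB; case: ifP => [/eqP ->|_] //; by rewrite mul0r.
Qed.

Lemma Eabs_minus (R : realFieldType) (W : bdmc R) (psi : R -> R) : nonneg W ->
  Eabs (minus_ch W) psi =
  \sum_(y1 : out W) \sum_(y2 : out W) qW y1 * qW y2 * psi (`|DeltaW y1| * `|DeltaW y2|).
Proof.
move=> nn; rewrite pair_bigA /Eabs; apply: eq_bigr => y _.
have [a1 b1] := trE y.1 nn; have [a2 b2] := trE y.2 nn.
set q1 := qW y.1; set q2 := qW y.2; set d1 := DeltaW y.1; set d2 := DeltaW y.2.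
rewrite (@term_eq _ (minus_ch W) y (q1 * q2 * (1 + d1 * d2)) (q1 * q2 * (1 - d1 * d2))); first last.
- by rewrite /= big_bool /= b1 a1 b2 a2 /q1 /q2 /d1 /d2; field.
- by rewrite /= big_bool /= b1 a1 b2 a2 /q1 /q2 /d1 /d2; field.
have -> : (q1 * q2 * (1 + d1 * d2) + q1 * q2 * (1 - d1 * d2)) / 2 = q1 * q2 by field.
have [h|h] := eqVneq (q1 * q2) 0; first by rewrite h mul0r.
have -> : (q1 * q2 * (1 + d1 * d2) - q1 * q2 * (1 - d1 * d2)) /
    (q1 * q2 * (1 + d1 * d2) + q1 * q2 * (1 - d1 * d2)) = d1 * d2.
  field; have -> : q1 * q2 * (1 + d1 * d2) + q1 * q2 * (1 - d1 * d2) = q1 * q2 * 2 by ring.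
  by rewrite mulf_neq0 //; lra.
by rewrite normrM.
Qed.

Lemma hterm (R : realFieldType) (psi : R -> R) (q s z : R) : 0 <= s ->
  (if q * s / 2 == 0 then 0 else q * s / 2 * psi `|q * z / (q * s)|) = 2^-1 * q * Pf psi s `|z|.
Proof.
move=> s0; rewrite /Pf.
have [->|qn] := eqVneq q 0; first by rewrite !mul0r eqxx mulr0 mul0r.
have [->|sn] := eqVneq s 0; first by rewrite ?mulr0 ?mul0r ?eqxx ?mulr0 ?mul0r.
have -> : (q * s / 2 == 0) = false.
  by apply/negbTE; rewrite !mulf_neq0 //; rewrite invr_eq0; lra.
have sp : 0 < s by rewrite lt_def sn.
have -> : q * z / (q * s) = z / s by field; apply/andP; split.
by rewrite normrM normfV (gtr0_norm sp); field.
Qed.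

Lemma term_eq2 (R : realFieldType) (U : bdmc R) (y : out U) (q s z : R) (psi : R -> R) :
  tr U y false + tr U y true = q * s -> tr U y false - tr U y true = q * z -> 0 <= s ->
  qW y * psi `|DeltaW y| = 2^-1 * q * Pf psi s `|z|.
Proof. by move=> h1 h2 s0; rewrite (term_eq psi (erefl _) (erefl _)) h1 h2; apply: hterm. Qed.

Lemma gg_oppl (R : realFieldType) (psi : R -> R) a b : gg psi (- a) b = gg psi a b.
Proof.
rewrite /gg.
have e1 : 1 + - a * b = 1 - a * b by ring.
have e2 : `|- a + b| = `|b - a| by rewrite addrC.
have e3 : 1 - - a * b = 1 + a * b by ring.
have e4 : `|b - - a| = `|a + b| by rewrite opprK addrC.
by rewrite e1 e2 e3 e4 addrC.
Qed.

Lemma gg_oppr (R : realFieldType) (psi : R -> R) a b : gg psi a (- b) = gg psi a b.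
Proof.
rewrite /gg.
have e1 : 1 + a * - b = 1 - a * b by ring.
have e2 : `|a + - b| = `|b - a| by rewrite distrC.
have e3 : 1 - a * - b = 1 + a * b by ring.
have e4 : `|- b - a| = `|a + b| by rewrite -normrN opprB opprK.
by rewrite e1 e2 e3 e4 addrC.
Qed.

Lemma gg_abs (R : realFieldType) (psi : R -> R) a b : gg psi a b = gg psi `|a| `|b|.
Proof.
have ea : gg psi a b = gg psi `|a| b.
  have [h|h] := leP 0 a; first by rewrite ger0_norm.
  by rewrite ltr0_norm // gg_oppl.
rewrite ea; have [h|h] := leP 0 b; first by rewrite (ger0_norm h).
by rewrite (ltr0_norm h) gg_oppr.
Qed.

Lemma Eabs_plus (R : realFieldType) (W : bdmc R) (psi : R -> R) : nonneg W ->
  Eabs (plus_ch W) psi =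
  \sum_(y1 : out W) \sum_(y2 : out W) qW y1 * qW y2 * gg psi `|DeltaW y1| `|DeltaW y2|.
Proof.
move=> nn; rewrite pair_bigA /Eabs.
have -> : \sum_(y : out (plus_ch W)) qW y * psi `|DeltaW y| =
   \sum_(p : out W * out W) \sum_(u : bool) qW (W:=plus_ch W) (p, u) * psi `|DeltaW (W:=plus_ch W) (p, u)|.
  by rewrite pair_bigA; apply: eq_bigr => [[p u]] _.
apply: eq_bigr => p _; rewrite big_bool /=.
have [a1 b1] := trE p.1 nn; have [a2 b2] := trE p.2 nn.
have d1 := d01 p.1 nn; have d2 := d01 p.2 nn.
rewrite (@term_eq2 _ (plus_ch W) (p, true) (qW p.1 * qW p.2) (1 - DeltaW p.1 * DeltaW p.2)
          (DeltaW p.2 - DeltaW p.1)); first last.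
- move: d1 d2; rewrite /in01 !ler_norml => /andP[_ /andP[? ?]] /andP[_ /andP[? ?]]; nra.
- by rewrite /= a1 a2 b1 b2; field.
- by rewrite /= a1 a2 b1 b2; field.
rewrite (@term_eq2 _ (plus_ch W) (p, false) (qW p.1 * qW p.2) (1 + DeltaW p.1 * DeltaW p.2)
          (DeltaW p.1 + DeltaW p.2)); first last.
- move: d1 d2; rewrite /in01 !ler_norml => /andP[_ /andP[? ?]] /andP[_ /andP[? ?]]; nra.
- by rewrite /= a1 a2 b1 b2; field.
- by rewrite /= a1 a2 b1 b2; field.
by rewrite -gg_abs /gg; field.
Qed.

Definition icx01 (R : realFieldType) (V W : bdmc R) : Prop :=
  forall psi : R -> R, convex_on (@in01 R) psi -> nondecr_on (@in01 R) psi ->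
    Eabs V psi <= Eabs W psi.

Lemma swap (R : realFieldType) (V W : bdmc R) (h : R -> R -> R) :
  nonneg V -> nonneg W -> icx01 V W -> (forall a b, h a b = h b a) ->
  (forall b, in01 b -> convex_on (@in01 R) (fun a => h a b) /\ nondecr_on (@in01 R) (fun a => h a b)) ->
  \sum_(y1 : out V) \sum_(y2 : out V) qW y1 * qW y2 * h `|DeltaW y1| `|DeltaW y2|
  <= \sum_(z1 : out W) \sum_(z2 : out W) qW z1 * qW z2 * h `|DeltaW z1| `|DeltaW z2|.
Proof.
move=> nV nW ic sy hh.
have E1 : \sum_(y1 : out V) \sum_(y2 : out V) qW y1 * qW y2 * h `|DeltaW y1| `|DeltaW y2|
   = \sum_(y2 : out V) qW y2 * Eabs V (fun x => h x `|DeltaW y2|).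
  rewrite exchange_big; apply: eq_bigr => y2 _; rewrite /Eabs mulr_sumr.
  apply: eq_bigr => y1 _; ring.
have E2 : \sum_(z1 : out W) \sum_(z2 : out W) qW z1 * qW z2 * h `|DeltaW z1| `|DeltaW z2|
   = \sum_(z1 : out W) qW z1 * Eabs W (fun x => h x `|DeltaW z1|).
  apply: eq_bigr => z1 _; rewrite /Eabs mulr_sumr.
  apply: eq_bigr => z2 _; rewrite sy; ring.
have E3 : \sum_(y2 : out V) qW y2 * Eabs W (fun x => h x `|DeltaW y2|)
   = \sum_(z1 : out W) qW z1 * Eabs V (fun x => h x `|DeltaW z1|).
  rewrite /Eabs.
  under eq_bigr do rewrite mulr_sumr.
  rewrite exchange_big; apply: eq_bigr => z1 _; rewrite mulr_sumr.
  apply: eq_bigr => y2 _; rewrite sy; ring.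
rewrite E1 E2; apply: le_trans (_ : _ <= \sum_(y2 : out V) qW y2 * Eabs W (fun x => h x `|DeltaW y2|)) _.
  apply: ler_sum => y2 _; apply: ler_wpM2l; first exact: qW_ge0.
  by have [c m] := hh _ (d01 y2 nV); apply: ic.
rewrite E3; apply: ler_sum => z1 _; apply: ler_wpM2l; first exact: qW_ge0.
by have [c m] := hh _ (d01 z1 nW); apply: ic.
Qed.

Lemma bigmax_facts (R : realFieldType) (U : bdmc R) (F : out U -> R) : (forall y, 0 <= F y) ->
  0 <= \big[Num.max/0]_(y | F y < 1) F y /\ \big[Num.max/0]_(y | F y < 1) F y < 1 /\
  forall y, F y < 1 -> F y <= \big[Num.max/0]_(y | F y < 1) F y.
Proof.
move=> F0; split.
  apply: (big_ind (fun x => 0 <= x)); [exact: lexx | by move=> x y a b; rewrite le_max a | by []].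
split.
  apply: (big_ind (fun x => x < 1)); [exact: ltr01 | by move=> x y a b; rewrite gt_max a b | by []].
by move=> y hy; rewrite (bigD1 y) //= le_max lexx.
Qed.

Lemma base_icx (R : realFieldType) (V W : bdmc R) :
  nonneg V -> nonneg W -> icx_le V W -> icx01 V W.
Proof.
move=> nV nW ic psi cv mo.
have [c1a [c1b c1c]] := bigmax_facts (fun y : out V => normr_ge0 (DeltaW y)).
have [c2a [c2b c2c]] := bigmax_facts (fun y : out W => normr_ge0 (DeltaW y)).
set m1 := \big[Num.max/0]_(y : out V | `|DeltaW y| < 1) `|DeltaW y| in c1a c1b c1c.
set m2 := \big[Num.max/0]_(y : out W | `|DeltaW y| < 1) `|DeltaW y| in c2a c2b c2c.
have c0 : 0 <= Num.max m1 m2 by rewrite le_max c1a.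
have c1 : Num.max m1 m2 < 1 by rewrite gt_max c1b c2b.
have [psi' [cv' [mo' ag]]] := ext_psi cv mo c0 c1.
have key : forall x, in01 x -> (x < 1 -> x <= Num.max m1 m2) -> psi' x = psi x.
  move=> x /andP[x0 x1] hx; apply: ag.
  have [xl|xl] := ltP x 1; first by left; rewrite x0 hx.
  by right; apply: le_anti; rewrite x1 xl.
have -> : Eabs V psi = Eabs V psi'.
  apply: eq_bigr => y _; rewrite key //; first exact: d01.
  by move=> h; rewrite le_max c1c.
have -> : Eabs W psi = Eabs W psi'.
  apply: eq_bigr => y _; rewrite key //; first exact: d01.
  by move=> h; rewrite le_max c2c ?orbT.
by apply: ic.
Qed.

Lemma nonneg_step (R : realFieldType) (W : bdmc R) b : nonneg W -> nonneg (step W b).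
Proof. by case: b => /=; [apply: nonneg_plus | apply: nonneg_minus]. Qed.

Lemma step_icx (R : realFieldType) (V W : bdmc R) b :
  nonneg V -> nonneg W -> icx01 V W -> icx01 (step V b) (step W b).
Proof.
move=> nV nW ic psi cv mo; case: b => /=.
  rewrite !Eabs_plus //; apply: swap => //; first exact: gg_sym.
  by move=> b hb; split; [apply: gg_convex | apply: gg_mono].
rewrite !Eabs_minus //; apply: (swap (h := fun a b => psi (a * b))) => //.
  by move=> a b; rewrite mulrC.
by move=> b hb; split; [apply: mul_convex | apply: mul_mono].
Qed.

Lemma polar_icx (R : realFieldType) (s : seq pm) : forall V W : bdmc R,
  nonneg V -> nonneg W -> icx01 V W -> icx01 (polar V s) (polar W s).
Proof.
elim: s => [|b s IH] V W nV nW ic //=.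
apply: IH; [exact: nonneg_step | exact: nonneg_step | exact: step_icx].
Qed.

Unset Implicit Arguments.
Theorem corollary1 (R : realFieldType) (W V : bdmc R) :
  is_bdmc W -> is_bdmc V -> icx_le V W ->
  forall (eps : R) (phi : R -> R),
    0 < eps < 1 ->
    convex_on (fun x => 0 <= x <= 1) phi ->
    nondecr_on (fun x => 0 <= x <= 1) phi ->
    phi 0 = 0 -> phi 1 = 1 ->
    forall (n : nat), (1 <= n)%N ->
    forall s : seq pm, size s = n ->
      infoset V phi eps s -> infoset W phi eps s.
Proof.
move=> [nW _] [nV _] ic eps phi _ cv mo _ _ n _ s _.
rewrite /infoset => H; apply: le_trans H _.
exact: (polar_icx s nV nW (base_icx nV nW ic) cv mo).
Qed.
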